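(* Let $\mathcal{L}$ be a $d$-colex, let $1\le k<d$, and let $C\subset\mathbb{Z}_{d+1}$ be a set of $k+1$ colors. Then the restriction maps $\pi_C^{(0)},\pi_C^{(1)},\pi_C^{(2)}$ form a morphism of chain complexes from $C_{d-k-1}(\mathcal{L})\xrightarrow{\partial_{d-k-1,d}}C_d(\mathcal{L})\xrightarrow{\partial_{d,k-1}}C_{k-1}(\mathcal{L})$ to $C_{k+1}(\mathcal{L}_C)\xrightarrow{\partial^C_{k+1}}C_k(\mathcal{L}_C)\xrightarrow{\partial^C_k}C_{k-1}(\mathcal{L}_C)$, i.e. $\pi^{(0)}_C\circ\partial_{d,k-1}=\partial^C_k\circ\pi^{(1)}_C$ on $C_d(\mathcal{L})$ and $\pi^{(1)}_C\circ\partial_{d-k-1,d}=\partial^C_{k+1}\circ\pi^{(2)}_C$ on $C_{d-k-1}(\mathcal{L})$.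
   Context: Conventions: all complexes are finite. For a simplicial complex $\mathcal{L}$, $\Delta_k(\mathcal{L})$ is its set of $k$-simplices, and for a simplex $\kappa$, $\Delta_l(\kappa)$ is the set of its $l$-dimensional faces. $C_k(\mathcal{L})$ is the $\mathbb{F}_2$-vector space with basis $\Delta_k(\mathcal{L})$; chains are identified with subsets. $\partial_k\kappa=\sum_{\nu\in\Delta_{k-1}(\kappa)}\nu$. For a $j$-simplex $\kappa$ and $n\ge j$, $\mathrm{Star}_n(\kappa)=\{\nu\in\Delta_n(\mathcal{L}):\kappa\in\Delta_j(\nu)\}$; for $n\le d-j-1$, $\mathrm{Link}_n(\kappa)=\{\nu\in\Delta_n(\mathcal{L}):\nu\cap\kappa=\emptyset\text{ and some }d\text{-simplex contains both}\}$, regarded as an $n$-chain. Generalized boundary maps: for $j\ne n$, $\partial_{j,n}:C_j(\mathcal{L})\to C_n(\mathcal{L})$ is linear with $\partial_{j,n}\kappa=\sum_{\nu\in\Delta_n(\kappa)}\nu$ if $j>n$ and $\partial_{j,n}\kappa=\sum_{\nu\in\mathrm{Star}_n(\kappa)}\nu$ if $j<n$. Colexes: a colorable $0$-ball is a point and a $0$-colex is a finite set of points. For $d\ge1$, a colorable $d$-ball $\mathcal{B}_v$ is the set of $d$-simplices $\{v*\delta:\delta\in\Delta_{d-1}(K)\}$ (where $v*\delta$ is the simplex spanned by $v$ and the vertices of $\delta$) for a $(d-1)$-colex $K$ homeomorphic to the $(d-1)$-sphere and a vertex $v\notin K$; its boundary is $\partial\mathcal{B}_v=K$. For $d\ge1$,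 a $d$-colex (without boundary) $\mathcal{L}$ is a homogeneous simplicial $d$-complex which is a finite union of colorable $d$-balls (sharing no $d$-simplex) glued along their boundaries so that every $(d-1)$-simplex lies in the boundary of exactly two distinct balls, and whose vertices are $(d+1)$-colorable: there is $\mathrm{col}:\Delta_0(\mathcal{L})\to\mathbb{Z}_{d+1}=\{0,\dots,d\}$ assigning distinct colors to the endpoints of every edge. Standing structure: for every vertex $v$, the set of $d$-simplices containing $v$ is the colorable $d$-ball centered at $v$. For a simplex or chain $\alpha$, $\mathrm{col}(\alpha)$ is the set of colors of its vertices. Restricted lattice: for $|C|=k+1$, $\mathcal{L}_C$ is the cell $(k+1)$-complex whose $i$-cells ($0\le i\le k$) are the $i$-simplices $\iota$ of $\mathcal{L}$ with $\mathrm{col}(\iota)\subseteq C$, and whose $(k+1)$-cells are symbols $\Xi(\delta)$, one for each $(d-k-1)$-simplex $\delta$ of $\mathcal{L}$ with $\mathrm{col}(\delta)=\mathbb{Z}_{d+1}\setminus C$. $C_i(\mathcal{L}_C)$ is the $\mathbb{F}_2$-space on its $i$-cells; $\partial_i^C=\partial_i$ on $C_i(\mathcal{L}_C)$ for $1\le i\le k$, and $\partial^C_{k+1}\Xi(\delta)=\mathrm{Link}_k(\delta)$. Restriction maps (linear, defined on basis elements): $\pi^{(0)}_C:C_{k-1}(\mathcal{L})\to C_{k-1}(\mathcal{L}_C)$, $\pi^{(0)}_C(\mu)=\mu$ if $\mathrm{col}(\mu)\subset C$ and $0$ otherwise; $\pi^{(1)}_C:C_d(\mathcal{L})\to C_k(\mathcal{L}_C)$,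 $\pi^{(1)}_C(\delta)=\delta|_C$, the unique $k$-face of the $d$-simplex $\delta$ with color set $C$; $\pi^{(2)}_C:C_{d-k-1}(\mathcal{L})\to C_{k+1}(\mathcal{L}_C)$, $\pi^{(2)}_C(\nu)=\Xi(\nu)$ if $\mathrm{col}(\nu)=\mathbb{Z}_{d+1}\setminus C$ and $0$ otherwise. *)

(* Defs.v *)
From Stdlib Require Import Reals.
From mathcomp Require Import all_boot.

Set Implicit Arguments.
Unset Strict Implicit.
Unset Printing Implicit Defensive.

Section Complexes.
Variable V : finType.

(* A finite simplicial complex on the vertex type V is a set of nonempty
   vertex sets closed under taking nonempty subsets.  A j-simplex has j+1
   vertices. *)
Definition is_complex (L : {set {set V}}) : Prop :=
  set0 \notin L /\
  (forall s t : {set V}, s \in L -> t \subset s -> t != set0 -> t \in L).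

Definition simplices (L : {set {set V}}) (j : nat) : {set {set V}} :=
  [set s in L | #|s| == j.+1].

Definition faces_of (s : {set V}) (l : nat) : {set {set V}} :=
  [set t : {set V} | (t \subset s) && (#|t| == l.+1)].

Definition homogeneous (d : nat) (L : {set {set V}}) : Prop :=
  is_complex L /\
  (forall s, s \in L -> #|s| <= d.+1) /\
  (forall s, s \in L -> exists2 D, D \in simplices L d & s \subset D).

Definition is_vertex (L : {set {set V}}) (v : V) : bool := [set v] \in L.

Definition proper_coloring (n : nat) (L : {set {set V}}) (col : V -> 'I_n)
  : Prop :=
  forall u v : V, [set u; v] \in L -> u != v -> col u != col v.

(* the colorable ball v * K, as the set of its top simplices *)
Definition cone_top (v : V) (K : {set {set V}}) (n : nat) : {set {set V}} :=
  [set v |: t | t in simplices K n].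

Definition star (L : {set {set V}}) (n : nat) (s : {set V}) :=
  [set t in simplices L n | s \subset t].

Definition link (L : {set {set V}}) (d n : nat) (s : {set V}) :=
  [set t in simplices L n |
     [disjoint t & s] &&
     [exists D in simplices L d, (t \subset D) && (s \subset D)]].

Definition rsum (I : finType) (x : I -> R) : R := \big[Rplus/R0]_(i : I) x i.

(* points of the geometric realization |K| in the barycentric model R^V *)
Definition realization (K : {set {set V}}) (x : V -> R) : Prop :=
  (forall v, Rle R0 (x v)) /\ rsum x = R1 /\
  (exists2 s, s \in K & forall v, x v <> R0 -> v \in s).

End Complexes.

Definition sphere_pt (n : nat) (y : 'I_n.+1 -> R) : Prop :=
  rsum (fun i => Rmult (y i) (y i)) = R1.

(* continuity of f on A (for the sup-distance on finite-dimensional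
   coordinate spaces; all norms there are equivalent) *)
Definition cont_on (I J : finType) (A : (I -> R) -> Prop)
  (f : (I -> R) -> (J -> R)) : Prop :=
  forall x, A x -> forall eps, Rlt R0 eps ->
    exists2 delta, Rlt R0 delta &
      forall y, A y -> (forall i, Rlt (Rabs (Rminus (y i) (x i))) delta) ->
        forall j, Rlt (Rabs (Rminus (f y j) (f x j))) eps.

Definition homeomorphic (I J : finType) (A : (I -> R) -> Prop)
  (B : (J -> R) -> Prop) : Prop :=
  exists (f : (I -> R) -> (J -> R)) (g : (J -> R) -> (I -> R)),
    (forall x, A x -> B (f x)) /\ (forall y, B y -> A (g y)) /\
    (forall x, A x -> forall i, g (f x) i = x i) /\
    (forall y, B y -> forall j, f (g y) j = y j) /\
    cont_on A f /\ cont_on B g.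

(* d-colexes, by recursion on d.
   - 0-colex: a finite set of points.
   - (d'+1)-colex L: a homogeneous simplicial (d'+1)-complex with a proper
     (d'+2)-coloring, which is a union of colorable balls z * K_z (z in Z,
     K_z a d'-colex homeomorphic to S^{d'}, z not a vertex of K_z), every
     top simplex of L lying in exactly one ball, every d'-simplex lying on
     some ball boundary lying on exactly two ball boundaries; and (standing
     structure) for every vertex v the set of top simplices containing v
     is a colorable ball centered at v. *)
Fixpoint colex (V : finType) (d : nat) (L : {set {set V}}) : Prop :=
  match d with
  | 0 => forall s, s \in L -> #|s| == 1
  | d'.+1 =>
    homogeneous d L /\
    (exists col : V -> 'I_d.+1, proper_coloring L col) /\
    (exists (Z : {set V}) (Kz : V -> {set {set V}}),
       (forall z, z \in Z ->
          [/\ colex d' (Kz z),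
              homeomorphic (realization (Kz z)) (@sphere_pt d'),
              ~~ is_vertex (Kz z) z &
              cone_top z (Kz z) d' \subset simplices L d]) /\
       (forall D, D \in simplices L d ->
          #|[set z in Z | D \in cone_top z (Kz z) d']| == 1) /\
       (forall r, (exists2 z, z \in Z & r \in simplices (Kz z) d') ->
          #|[set z in Z | r \in Kz z]| == 2)) /\
    (forall v, is_vertex L v ->
       exists K : {set {set V}},
         [/\ colex d' K,
             homeomorphic (realization K) (@sphere_pt d'),
             ~~ is_vertex K v &
             star L d [set v] = cone_top v K d'])
  end.

(* F_2-chains are identified with subsets; addition is symmetric difference *)
Definition symdiff (T : finType) (A B : {set T}) : {set T} :=
  (A :\: B) :|: (B :\: A).

Definition linext (T U : finType) (f : T -> {set U}) (c : {set T}) : {set U} :=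
  \big[@symdiff U/set0]_(x in c) f x.

Section Maps.
Variable V : finType.

(* generalized boundary map partial_{j,n} (for j <> n) on basis elements *)
Definition gbd_basis (L : {set {set V}}) (j n : nat) (s : {set V}) :=
  if n < j then faces_of s n else star L n s.

Definition gbd (L : {set {set V}}) (j n : nat) (c : {set {set V}}) :=
  linext (gbd_basis L j n) c.

(* cells of the restricted lattice L_C: inl i = the simplex i,
   inr D = the symbol Xi(D) *)
Definition cell := ({set V} + {set V})%type.

Variable d : nat.
Variable col : V -> 'I_d.+1.

Definition colset (s : {set V}) : {set 'I_d.+1} := col @: s.

(* boundary maps of L_C on basis cells:
   partial^C_i (i-cells, 1 <= i <= k) and partial^C_{k+1} (Xi cells) *)
Definition bdC_basis (L : {set {set V}}) (k i : nat) (x : cell) : {set cell} :=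
  match x with
  | inl s => inl @: faces_of s i.-1
  | inr D => inl @: link L d k D
  end.

Definition bdC (L : {set {set V}}) (k i : nat) (c : {set cell}) :=
  linext (bdC_basis L k i) c.

Definition pi0_basis (C : {set 'I_d.+1}) (m : {set V}) : {set cell} :=
  if colset m \subset C then [set inl m] else set0.
Definition pi0 C := linext (pi0_basis C).

Definition restr (C : {set 'I_d.+1}) (D : {set V}) : {set V} :=
  [set v in D | col v \in C].
Definition pi1_basis (C : {set 'I_d.+1}) (D : {set V}) : {set cell} :=
  [set inl (restr C D)].
Definition pi1 C := linext (pi1_basis C).

Definition pi2_basis (C : {set 'I_d.+1}) (n : {set V}) : {set cell} :=
  if colset n == ~: C then [set inr n] else set0.
Definition pi2 C := linext (pi2_basis C).

End Maps.

(* Main.v *)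
From HB Require Import structures.
Require Import Defs.
From Stdlib Require Import Reals Lra FunctionalExtensionality.
From mathcomp Require Import all_boot zify.
Set Implicit Arguments. Unset Strict Implicit.

Lemma symdiff_mem (T:finType) (A B : {set T}) x :
  (x \in symdiff A B) = (x \in A) (+) (x \in B).
Proof. rewrite /symdiff !inE; by case: (x \in A); case: (x \in B). Qed.

Lemma linext_mem (T U : finType) (f : T -> {set U}) c x :
  (x \in linext f c) = \big[addb/false]_(y in c) (x \in f y).
Proof.
rewrite /linext.
apply: (big_rec2 (fun (S : {set U}) (b : bool) => (x \in S) = b)); first by rewrite inE.
by move=> y S b _ IH; rewrite symdiff_mem IH.
Qed.

Lemma big_addb_andr (T : finType) (A : {pred T}) (P : T -> bool) b :
  (\big[addb/false]_(i in A) P i) && b = \big[addb/false]_(i in A) (P i && b).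
Proof.
case: b; last by rewrite andbF big1 // => i _; rewrite andbF.
by rewrite andbT; apply: eq_bigr => i _; rewrite andbT.
Qed.

Lemma linext_comp (T U W : finType) (f : T -> {set U}) (g : U -> {set W}) c :
  linext g (linext f c) = linext (fun y => linext g (f y)) c.
Proof.
apply/setP => z; rewrite !linext_mem big_mkcond /=.
under eq_bigr => m _ do rewrite linext_mem -[if _ then _ else _]/((_ : bool) && _) big_addb_andr.
rewrite exchange_big /=; apply: eq_bigr => y _.
rewrite linext_mem [RHS]big_mkcond /=.
by apply: eq_bigr => m _; case: (m \in f y).
Qed.

Lemma linext_eq (T U : finType) (f1 f2 : T -> {set U}) (c : {set T}) :
  {in c, f1 =1 f2} -> linext f1 c = linext f2 c.
Proof. by move=> H; apply: eq_bigr => y /H. Qed.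

Lemma linext_set1 (T U : finType) (f : T -> {set U}) x : linext f [set x] = f x.
Proof. by apply/setP => z; rewrite linext_mem big_set1. Qed.

Lemma linext_set0 (T U : finType) (f : T -> {set U}) : linext f set0 = set0.
Proof. by apply/setP => z; rewrite linext_mem big_set0 inE. Qed.

Lemma xor_card (T : finType) (A : {set T}) (P : pred T) :
  \big[addb/false]_(i in A) P i = odd #|[set i in A | P i]|.
Proof.
have -> : #|[set i in A | P i]| = \sum_(i in A) (P i : nat).
  rewrite -sum1_card big_mkcond [RHS]big_mkcond /=; apply: eq_bigr => i _.
  by rewrite inE; case: (i \in A); case: (P i).
rewrite (big_morph odd oddD (erefl (odd 0))).
by apply: eq_bigr => i _; rewrite oddb.
Qed.

Lemma sum_bool_card (T : finType) (A : {set T}) (P : pred T) :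
  \sum_(i in A) (P i : nat) = #|[set i in A | P i]|.
Proof.
rewrite -sum1_card big_mkcond [RHS]big_mkcond /=; apply: eq_bigr => i _.
by rewrite inE; case: (i \in A); case: (P i).
Qed.

Lemma Rplus_assoc' : associative Rplus.
Proof. by move=> x y z; rewrite Rplus_assoc. Qed.
HB.instance Definition _ := Monoid.isComLaw.Build R R0 Rplus Rplus_assoc' Rplus_comm Rplus_0_l.

Lemma E0 (V : finType) (K : {set {set V}}) :
  colex 0 K -> homeomorphic (realization K) (@sphere_pt 0) -> #|simplices K 0| = 2.
Proof.
move=> HK [f [g [Hf [Hg [Hgf [Hfg _]]]]]].
pose e (v : V) := fun w : V => if w == v then R1 else R0.
have real_e : forall v, [set v] \in K -> realization K (e v).
  move=> v Hv; split; first by move=> w; rewrite /e; case: (w == v); lra.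
  split; last by exists [set v] => // w; rewrite /e inE; case: (w == v).
  rewrite /rsum (bigD1 v) //= /e eqxx big1 => [|w /negbTE -> //]; lra.
have real_inv : forall x, realization K x -> exists2 v, [set v] \in K & forall w, x w = e v w.
  move=> x [Hnn [Hsum [s Hs Hsupp]]].
  case/cards1P: (HK s Hs) => v Es; exists v; first by rewrite -Es.
  have H0 : forall w, w != v -> x w = R0.
    move=> w Hw; destruct (Req_dec (x w) R0) as [E|E] => //.
    by move: (Hsupp w E); rewrite Es inE (negbTE Hw).
  move=> w; rewrite /e; case: eqP => [->|/eqP Hw]; last exact: H0.
  move: Hsum; rewrite /rsum (bigD1 v) //= big1 => [|w' /H0 //]; lra.
have sph : forall y : 'I_1 -> R, sphere_pt y <-> Rmult (y ord0) (y ord0) = R1.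
  by move=> y; rewrite /sphere_pt /rsum big_ord1.
pose y1 := fun _ : 'I_1 => R1.
pose y2 := fun _ : 'I_1 => (Ropp R1).
have Hy1 : sphere_pt y1 by apply/sph; rewrite /y1; lra.
have Hy2 : sphere_pt y2 by apply/sph; rewrite /y2; lra.
case: (real_inv _ (Hg _ Hy1)) => a Ha Ea.
case: (real_inv _ (Hg _ Hy2)) => b Hb Eb.
have Hab : a != b.
  apply/eqP => Eab.
  have Egg : g y1 = g y2 by apply: functional_extensionality => w; rewrite Ea Eb Eab.
  have := Hfg _ Hy1 ord0; have := Hfg _ Hy2 ord0; rewrite Egg /y1 /y2 => -> ; lra.
have classify : forall v, [set v] \in K -> v = a \/ v = b.
  move=> v Hv.
  have Hfe := Hf _ (real_e v Hv); move/sph: Hfe => Hfe.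
  have Hpm : f (e v) ord0 = R1 \/ f (e v) ord0 = (Ropp R1).
    have : Rmult (Rminus (f (e v) ord0) R1) (Rplus (f (e v) ord0) R1) = R0 by lra.
    case/Rmult_integral => ?; [left|right]; lra.
  have Hev : e v v = R1 by rewrite /e eqxx.
  case: Hpm => Hpm; [left|right].
    have Ef : f (e v) = y1.
      by apply: functional_extensionality => j; rewrite (ord1 j) Hpm.
    have := Hgf _ (real_e v Hv) v; rewrite Ef Ea Hev /e.
    by case: eqP => // _; lra.
  have Ef : f (e v) = y2.
    by apply: functional_extensionality => j; rewrite (ord1 j) Hpm.
  have := Hgf _ (real_e v Hv) v; rewrite Ef Eb Hev /e.
  by case: eqP => // _; lra.
have -> : simplices K 0 = [set [set a]; [set b]].
  apply/setP => s; rewrite !inE; apply/andP/orP.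
    case=> Hs /cards1P [v Es]; rewrite Es in Hs *.
    by case: (classify v Hs) => ->; [left|right].
  by case=> /eqP ->; rewrite cards1.
rewrite cards2; congr (_.+1); apply/eqP; rewrite eqb1; apply: contra Hab => /eqP E.
by apply/eqP; apply/set1_inj.
Qed.

Lemma sub_restr (V : finType) d (col : V -> 'I_d.+1) C (D t : {set V}) :
  (t \subset restr col C D) = (t \subset D) && (colset col t \subset C).
Proof.
apply/idP/andP => [/subsetP H | [/subsetP H1 /subsetP H2]].
  split; apply/subsetP => x.
    by move/H; rewrite inE => /andP[].
  by case/imsetP => y /H; rewrite inE => /andP[_ ?] ->.
apply/subsetP => x Hx; rewrite inE H1 //=; apply: H2; exact: imset_f.
Qed.

Lemma part1 (V : finType) (d k : nat) (L : {set {set V}})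
  (col : V -> 'I_d.+1) (C : {set 'I_d.+1}) (c : {set {set V}}) :
  k.-1 < d ->
  pi0 col C (gbd L d k.-1 c) = bdC d L k k (pi1 col C c).
Proof.
move=> Hk.
rewrite /pi0 /gbd /bdC /pi1 !linext_comp; apply: linext_eq => D _.
rewrite linext_set1 /gbd_basis Hk /=.
apply/setP => x; rewrite linext_mem; case: x => [t|t].
  rewrite mem_imset; last by move=> ? ? [].
  have -> : \big[addb/false]_(m in faces_of D k.-1) (inl t \in pi0_basis col C m)
     = (t \in faces_of D k.-1) && (colset col t \subset C).
    case: (boolP (t \in faces_of D k.-1)) => Ht.
      rewrite (bigD1 t Ht) /= big1 => [|m /andP[_ Hmt]].
        rewrite /pi0_basis; case: ifP => _; last by rewrite inE.
        by rewrite inE eqxx.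
      rewrite /pi0_basis; case: ifP => _; last by rewrite inE.
      by rewrite inE; apply/eqP => [[E]]; move: Hmt; rewrite -E eqxx.
    rewrite big1 // => m Hm; rewrite /pi0_basis; case: ifP => _; last by rewrite inE.
    by rewrite inE; apply/eqP => [[E]]; move: Ht; rewrite E Hm.
  by rewrite !inE sub_restr; case: (t \subset D); case: (_ == _); case: (_ \subset C).
rewrite big1; last first.
  by move=> m _; rewrite /pi0_basis; case: ifP => _; rewrite inE.
by apply/esym/negbTE/imsetP => [[? _]].
Qed.

Lemma col_inj (V : finType) n (L : {set {set V}}) (col : V -> 'I_n) D :
  is_complex L -> proper_coloring L col -> D \in L -> {in D &, injective col}.
Proof.
move=> [_ Hc] Hcol HD u v Hu Hv E; apply/eqP; apply: contraT => Huv.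
have Huv' : [set u; v] \in L.
  apply: (Hc D) => //; first by apply/subsetP => x; rewrite !inE => /orP[]/eqP->.
  by apply/set0Pn; exists u; rewrite !inE eqxx.
by move: (Hcol u v Huv' Huv); rewrite E eqxx.
Qed.

Lemma col_full (V : finType) n (L : {set {set V}}) (col : V -> 'I_n.+1) D :
  is_complex L -> proper_coloring L col -> D \in simplices L n ->
  col @: D = [set: 'I_n.+1].
Proof.
move=> Hc Hcol; rewrite inE => /andP[HD /eqP HcD].
apply/eqP; rewrite eqEcard subsetT /= cardsT card_ord (card_in_imset (col_inj Hc Hcol HD)).
by rewrite HcD.
Qed.

Lemma count_color (V : finType) n (K : {set {set V}}) (colK : V -> 'I_n.+1) :
  is_complex K -> proper_coloring K colK ->
  #|simplices K n| = \sum_(u in [set u | colK u == ord0])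
                       #|[set t in simplices K n | [set u] \subset t]|.
Proof.
move=> Hc Hcol.
under [RHS]eq_bigr => u _ do rewrite -sum_bool_card.
rewrite exchange_big /= -sum1_card; apply: eq_bigr => t Ht.
under eq_bigr => u _ do rewrite sub1set.
rewrite sum_bool_card.
have : ord0 \in colK @: t by rewrite (col_full Hc Hcol Ht) inE.
case/imsetP => u0 Hu0 E0.
have Hinj : {in t &, injective colK} by apply: (col_inj Hc Hcol); move: Ht; rewrite inE => /andP[].
suff -> : [set i in [set u | colK u == ord0] | i \in t] = [set u0] by rewrite cards1.
apply/setP => x; rewrite !inE; apply/andP/eqP => [[/eqP Ex Hx]|->].
  by apply: Hinj => //; rewrite Ex.
by rewrite -E0.
Qed.



Lemma vertex_in (V : finType) d (K : {set {set V}}) t v :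
  colex d K -> t \in K -> v \in t -> [set v] \in K.
Proof.
case: d => [|d] /= HK Ht Hv.
  by case/cards1P: (HK t Ht) => x Ex; move: Ht Hv; rewrite Ex inE => ? /eqP ->.
case: HK => [[[_ Hc] _] _]; apply: (Hc t) => //; first by rewrite sub1set.
by apply/set0Pn; exists v; rewrite inE.
Qed.

Lemma sum_even (I : finType) (A : {pred I}) (F : I -> nat) :
  (forall i, A i -> ~~ odd (F i)) -> ~~ odd (\sum_(i in A) F i).
Proof.
move=> H; apply: (big_ind (fun n => ~~ odd n)) => //.
  by move=> x y Hx Hy; rewrite oddD (negbTE Hx) (negbTE Hy).
Qed.

Lemma tops_even n (V : finType) (K : {set {set V}}) :
  (forall (V : finType) (L : {set {set V}}) (s : {set V}),
     colex n L -> s != set0 -> #|s| <= n ->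
     ~~ odd #|[set D in simplices L n | s \subset D]|) ->
  colex n K -> homeomorphic (realization K) (@sphere_pt n) ->
  ~~ odd #|simplices K n|.
Proof.
case: n => [|d''] IH HK Hhomeo.
  by rewrite (E0 HK Hhomeo).
have HK' := HK; case: HK' => [[HcK _] [[colK HcolK] _]].
rewrite (count_color HcK HcolK); apply: sum_even => u _.
apply: IH => //; first by apply/set0Pn; exists u; rewrite inE.
by rewrite cards1.
Qed.

Theorem star_even d : forall (V : finType) (L : {set {set V}}) (s : {set V}),
  colex d L -> s != set0 -> #|s| <= d ->
  ~~ odd #|[set D in simplices L d | s \subset D]|.
Proof.
elim: d => [|d' IH] V L s HL Hs Hcard.
  by move: Hs; rewrite -card_gt0; case: #|s| Hcard.
have HL' := HL; case: HL' => [[[H0 Hc] _] [[col Hcol] [_ Hstar]]].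
set A := [set D in simplices L d'.+1 | s \subset D].
case: (set_0Vmem A) => [-> | [D0 HD0]]; first by rewrite cards0.
case/set0Pn: Hs => v Hv.
have Hvert : is_vertex L v.
  move: HD0; rewrite !inE => /andP[/andP[HD0 _] HsD0].
  apply: (Hc D0) => //; last by apply/set0Pn; exists v; rewrite inE.
  by rewrite sub1set; apply: (subsetP HsD0).
case: (Hstar v Hvert) => K [HK Hhomeo Hnv Hst].
have Hnotin : forall t, t \in simplices K d' -> v \notin t.
  move=> t; rewrite inE => /andP[Ht _]; apply/negP => Hvt.
  by move: Hnv; rewrite /is_vertex (vertex_in HK Ht Hvt).
have cardA : #|A| = #|[set t in simplices K d' | s :\ v \subset t]|.
  rewrite -[RHS](@card_in_imset _ _ (fun t => v |: t)); last first.
    move=> t1 t2 /setIdP[H1 _] /setIdP[H2 _] E.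
    by rewrite -(setU1K (Hnotin _ H1)) -(setU1K (Hnotin _ H2)) E.
  apply: eq_card => D; apply/idP/imsetP.
    move=> /setIdP[HD HsD].
    have : D \in star L d'.+1 [set v].
      by rewrite inE HD sub1set (subsetP HsD).
    rewrite Hst => /imsetP[t Ht ED]; rewrite ED in HsD; exists t => //.
    apply/setIdP; split => //; apply/subsetP => x /setD1P [Hxv Hx].
    by move: (subsetP HsD x Hx) => /setU1P [E|]; [move: Hxv; rewrite E eqxx|].
  case=> t /setIdP[Ht Hst'] ->.
  have : v |: t \in star L d'.+1 [set v] by rewrite Hst; apply: imset_f.
  case/setIdP => HvD _; apply/setIdP; split => //.
  apply/subsetP => x Hx; apply/setU1P; case: (eqVneq x v) => Hxv; [by left|right].
  by apply: (subsetP Hst'); apply/setD1P.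
rewrite cardA; case: (boolP (s :\ v == set0)) => Hsv.
  have -> : [set t in simplices K d' | s :\ v \subset t] = simplices K d'.
    by apply/setP => t; rewrite inE (eqP Hsv) sub0set andbT.
  exact: (tops_even IH HK Hhomeo).
apply: IH => //.
by move: Hcard; rewrite (cardsD1 v s) Hv add1n ltnS.
Qed.

Section P4.
Variables (V : finType) (d k : nat) (L : {set {set V}}) (col : V -> 'I_d.+1) (C : {set 'I_d.+1}).
Hypothesis Hc : is_complex L.
Hypothesis Hcol : proper_coloring L col.

Lemma restr_sub D : restr col C D \subset D.
Proof. by apply/subsetP => v; rewrite inE => /andP[]. Qed.

Lemma restr_card D : D \in simplices L d -> #|restr col C D| = #|C|.
Proof.
move=> HD.
have HD' : D \in L by move: HD; rewrite inE => /andP[].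
have Hinj : {in restr col C D &, injective col}.
  by apply: (sub_in2 (subsetP (restr_sub D))); apply: (col_inj Hc Hcol HD').
rewrite -(card_in_imset Hinj); apply: eq_card => c0; apply/imsetP/idP.
  by case=> v; rewrite inE => /andP[_ Hv] ->.
move=> Hc0; have : c0 \in col @: D by rewrite (col_full Hc Hcol HD) inE.
by case/imsetP => v Hv E; exists v => //; rewrite inE Hv -E Hc0.
Qed.

Lemma D_union (D s : {set V}) : D \in simplices L d -> s \subset D ->
  colset col s = ~: C -> D = s :|: restr col C D.
Proof.
move=> HD HsD Hcs.
have HD' : D \in L by move: HD; rewrite inE => /andP[].
apply/eqP; rewrite eqEsubset; apply/andP; split; last first.
  by rewrite subUset HsD restr_sub.
apply/subsetP => v Hv; rewrite inE; case: (boolP (col v \in C)) => Hcv.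
  by rewrite inE Hv Hcv orbT.
have : col v \in colset col s by rewrite Hcs inE.
case/imsetP => w Hw E.
by rewrite (col_inj Hc Hcol HD' Hv (subsetP HsD w Hw) E) Hw.
Qed.

Hypothesis HL : colex d L.
Hypothesis Hkd : k < d.
Hypothesis HC : #|C| = k.+1.

Lemma simp_L n D : D \in simplices L n -> D \in L.
Proof. by rewrite inE => /andP[]. Qed.

Lemma simp_card n D : D \in simplices L n -> #|D| = n.+1.
Proof. by rewrite inE => /andP[_ /eqP]. Qed.

Lemma case_eq (s t : {set V}) : s \in simplices L (d - k - 1) ->
  colset col s = ~: C ->
  \big[addb/false]_(D in star L d s) (t == restr col C D) = (t \in link L d k s).
Proof.
move=> Hs Hcs.
have Hunique : forall D, D \in star L d s -> t = restr col C D -> D = s :|: t.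
  move=> D /setIdP[HD HsD] ->; exact: D_union.
case: (boolP (t \in link L d k s)) => Ht.
  move: (Ht) => /setIdP[Htk /andP[Hdis /existsP[D' /andP[HD' /andP[HtD' HsD']]]]].
  have HD'L := simp_L HD'.
  have Er : restr col C D' = t.
    apply/esym/eqP; rewrite eqEcard (restr_card HD') HC -(simp_card Htk) leqnn andbT.
    apply/subsetP => v Hv; rewrite inE (subsetP HtD' v Hv) /=.
    apply: contraT => Hcv.
    have : col v \in colset col s by rewrite Hcs inE.
    case/imsetP => w Hw E.
    have Evw := col_inj Hc Hcol HD'L (subsetP HtD' v Hv) (subsetP HsD' w Hw) E.
    by move: Hdis; rewrite disjoint_subset => /subsetP /(_ v Hv); rewrite inE Evw Hw.
  have HD's : D' \in star L d s by apply/setIdP.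
  rewrite (bigD1 D' HD's) /= Er eqxx /= big1 // => D /andP[HD HDD'].
  apply/negbTE; apply: contra HDD' => /eqP Et.
  rewrite (Hunique D HD Et) (Hunique D' HD's (esym Er)).
  done.
rewrite big1 // => D /setIdP[HD HsD]; apply/negbTE; apply: contra Ht => /eqP Et.
have HDL := simp_L HD.
apply/setIdP; split.
  apply/setIdP; split; last by rewrite Et restr_card // HC.
  case: Hc => _ Hc'; apply: (Hc' D) => //; first by rewrite Et restr_sub.
  by rewrite -card_gt0 Et restr_card // HC.
apply/andP; split.
  rewrite disjoint_subset; apply/subsetP => v; rewrite Et inE => /andP[_ Hv].
  rewrite inE; apply/negP => Hvs.
  have : col v \in colset col s by apply: imset_f.
  by rewrite Hcs inE Hv.
apply/existsP; exists D; rewrite HD Et restr_sub HsD.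
done.
Qed.

Lemma case_neq (s t : {set V}) : s \in simplices L (d - k - 1) ->
  colset col s != ~: C ->
  \big[addb/false]_(D in star L d s) (t == restr col C D) = false.
Proof.
move=> Hs Hcs; rewrite xor_card; apply/negbTE.
set A := [set _ in _ | _].
case: (set_0Vmem A) => [-> | [D0 HD0]]; first by rewrite cards0.
move: HD0 => /setIdP[/setIdP[HD0 HsD0] /eqP Et].
have Ht : t \subset restr col C D0 by rewrite Et.
have HtC : colset col t \subset C by move: Ht; rewrite sub_restr => /andP[].
have -> : A = [set D in simplices L d | s :|: t \subset D].
  apply/setP => D; apply/setIdP/setIdP => [[/setIdP[HD HsD] /eqP ->]|[HD HstD]].
    by split => //; rewrite subUset HsD restr_sub.
  move: HstD; rewrite subUset => /andP[HsD HtD].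
  split; first by apply/setIdP.
  apply/eqP; apply/eqP; rewrite eqEcard sub_restr HtD HtC /=.
  by rewrite (restr_card HD) Et (restr_card HD0).
apply: star_even => //.
  have : 0 < #|t| by rewrite Et restr_card // HC.
  rewrite card_gt0 => /set0Pn [w Hw]; apply/set0Pn; by exists w; rewrite inE Hw orbT.
have HD0L := simp_L HD0.
have Hinjs : {in s &, injective col}.
  by apply: (sub_in2 (subsetP HsD0)); apply: (col_inj Hc Hcol HD0L).
have Hsub : ~~ (colset col s \subset ~: C).
  apply: contra Hcs => Hsub; rewrite eqEcard Hsub /=.
  rewrite /colset (card_in_imset Hinjs) (simp_card Hs) cardsCs setCK card_ord HC.
  lia.
case/subsetPn: Hsub => c0 /imsetP [w0 Hw0 ->]; rewrite inE negbK => Hcw.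
have Hwt : w0 \in s :&: t by rewrite inE Hw0 Et inE (subsetP HsD0 w0 Hw0) Hcw.
have : 0 < #|s :&: t| by rewrite card_gt0; apply/set0Pn; exists w0.
move=> Hpos; rewrite cardsU (simp_card Hs) Et (restr_card HD0) HC -Et.
lia.
Qed.
End P4.

Lemma colex_complex (V : finType) n (L : {set {set V}}) :
  0 < n -> colex n L -> is_complex L.
Proof. by case: n => // n _ [[]]. Qed.

Unset Implicit Arguments.
Set Strict Implicit.

Theorem lemma5 (V : finType) (d k : nat) (L : {set {set V}})
  (col : V -> 'I_d.+1) (C : {set 'I_d.+1}) :
  colex d L -> proper_coloring L col ->
  1 <= k -> k < d -> #|C| = k.+1 ->
  (forall c : {set {set V}}, c \subset simplices L d ->
     pi0 col C (gbd L d k.-1 c) = bdC d L k k (pi1 col C c)) /\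
  (forall c : {set {set V}}, c \subset simplices L (d - k - 1) ->
     pi1 col C (gbd L (d - k - 1) d c) = bdC d L k k.+1 (pi2 col C c)).
Proof.
move=> HL Hcol Hk1 Hkd HC.
have Hc : is_complex L by apply: (@colex_complex V d L _ HL); lia.
split.
  by move=> c _; apply: part1; lia.
move=> c Hc'; rewrite /pi1 /gbd /bdC /pi2 !linext_comp; apply: linext_eq => s Hs.
have Hs' := subsetP Hc' s Hs.
rewrite /gbd_basis ifF; last by apply/negbTE; rewrite -leqNgt; lia.
have Hinl : forall (t r : {set V}), (inl t \in pi1_basis col C r) = (t == restr col C r).
  by move=> t r; rewrite /pi1_basis inE; apply/eqP/eqP => [[->]|->].
rewrite /pi2_basis; case: eqP => Hcs.
  rewrite linext_set1 /=; apply/setP => x; rewrite linext_mem; case: x => [t|t].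
    rewrite mem_imset; last by move=> ? ? [].
    rewrite -(case_eq Hc Hcol HC t Hs' Hcs); apply: eq_bigr => D _.
    by rewrite Hinl.
  rewrite big1; last by move=> D _; rewrite /pi1_basis inE.
  by apply/esym/negbTE/imsetP => [[? _]].
rewrite linext_set0; apply/setP => x; rewrite linext_mem inE; case: x => [t|t].
  rewrite (eq_bigr (fun D => t == restr col C D)); last by move=> D _; rewrite Hinl.
  by apply: (case_neq Hc Hcol HL Hkd HC t Hs'); apply/eqP.
by rewrite big1 // => D _; rewrite /pi1_basis inE.
Qed.
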